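(* Let $\mathcal{I}=([n],M,\mathcal{V})$ be an instance with additive valuations, $\epsilon\ge0$, and $(N',M',\mathcal{V})=\mathtt{reduce}(\mathcal{I},\epsilon)$. Let $r_4$ be the number of times $R^{3/4+\epsilon}_4$ is applied during $\mathtt{reduce}(\mathcal{I},\epsilon)$ and $G_4$ the set of goods removed by these applications. Then for every agent $i\in N'$, $\mathrm{MMS}^{n-r_4}_{v_i}(M\setminus G_4)\ge1-4\epsilon$, where $v_i$ denotes the valuation obtained after steps (1)–(2) of $\mathtt{reduce}$ and $M$ the full set of goods.
   Context: $\mathrm{MMS}^d_v(S)$ is the maximum over partitions of $S$ into $d$ bundles of the minimum bundle value under $v$; $\mathrm{MMS}_i=\mathrm{MMS}^n_{v_i}(M)$. An instance is ordered if $M=[m]$ and $v_i(1)\ge\dots\ge v_i(m)$ for all agents $i$. $\mathtt{order}(([n],[m],\mathcal{V}))$ replaces $v_i$ by $v'_i$ where $v'_i(j)$ is the $j$-th largest number of the multiset $\{v_i(g):g\in[m]\}$. Rules for an ordered instance with $n$ current agents and threshold $\alpha$: $R^\alpha_1$ applicable if some agent $i$ has $v_i(1)\ge\alpha$; $R^\alpha_2$ if some $i$ has $v_i(\{2n-1,2n,2n+1\})\ge\alpha$; $R^\alpha_3$ if some $i$ has $v_i(\{3n-2,\dots,3n+1\})\ge\alpha$; $R^\alpha_4$ if some $i$ has $v_i(\{1,2n+1\})\ge\alpha$; applying it gives that set to such an agent and removes agent and goods, re-indexing the remaining goods in their order. $\mathtt{reduce}(\mathcal{I},\epsilon)$: (1)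 replace $\mathcal{I}$ by $\mathtt{order}(\mathcal{I})$; (2) set $v_i(g)\leftarrow v_i(g)/\mathrm{MMS}_i$ for all agents $i$ and goods $g$ (so every $\mathrm{MMS}_i$ becomes 1); (3) while some $R^{3/4+\epsilon}_k$, $k\in[4]$, is applicable, apply it for the smallest applicable $k$; output the remaining agents, goods and valuations. *)

(* Defs.v *)
From HB Require Import structures.
From mathcomp Require Import all_boot all_order all_algebra.
Set Implicit Arguments. Unset Strict Implicit. Unset Printing Implicit Defensive.
Import Order.TTheory GRing.Theory Num.Theory.
Local Open Scope ring_scope.

Section Defs.
Variable R : realFieldType.

Definition bval (m : nat) (v : 'I_m -> R) (S : {set 'I_m}) : R :=
  \sum_(g in S) v g.

(* minimum bundle value of the partition of S into d bundles given by f
   (good g in S goes to bundle f g); bundles may be empty. *)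
Definition part_min (m d : nat) (v : 'I_m -> R) (S : {set 'I_m})
    (f : {ffun 'I_m -> 'I_d}) : R :=
  \big[Num.min/bval v S]_(k < d) bval v [set g in S | f g == k].

(* MMS^d_v(S): maximum over partitions of S into d bundles of the minimum
   bundle value (valuations are nonnegative, so 0 is a harmless identity). *)
Definition MMS (m d : nat) (v : 'I_m -> R) (S : {set 'I_m}) : R :=
  \big[Num.max/0]_(f : {ffun 'I_m -> 'I_d}) part_min v S f.

(* step (1): order -- v'_i(j) is the (j+1)-th largest value of v_i (0-based j) *)
Definition order_val (n m : nat) (v : 'I_n -> 'I_m -> R) (i : 'I_n) (j : 'I_m) : R :=
  nth 0 (sort (fun x y : R => y <= x) [seq v i g | g <- enum 'I_m]) j.

Definition norm_val (n m : nat) (v : 'I_n -> 'I_m -> R) (i : 'I_n) (j : 'I_m) : R :=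
  order_val v i j / MMS n (order_val v i) setT.

(* state of the reduction loop: remaining agents, remaining goods in order *)
Definition state (n m : nat) := ({set 'I_n} * seq 'I_m)%type.

(* goods at the given 1-based positions among the remaining goods gs *)
Definition pos_set (m : nat) (gs : seq 'I_m) (P : seq nat) : {set 'I_m} :=
  [set g : 'I_m | (g \in gs) && ((index g gs).+1 \in P)].

(* positions of the set used by rule R_k, c = current number of agents *)
Definition rule_pos (k c : nat) : seq nat :=
  match k with
  | 1 => [:: 1]
  | 2 => [:: (2 * c - 1)%N; (2 * c)%N; (2 * c + 1)%N]
  | 3 => [:: (3 * c - 2)%N; (3 * c - 1)%N; (3 * c)%N; (3 * c + 1)%N]
  | 4 => [:: 1; (2 * c + 1)%N]
  | _ => [::]
  end.

Definition rule_set (n m : nat) (s : state n m) (k : nat) : {set 'I_m} :=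
  pos_set s.2 (rule_pos k #|s.1|).

Definition applicable (n m : nat) (w : 'I_n -> 'I_m -> R) (alpha : R)
    (s : state n m) (k : nat) : Prop :=
  exists2 i, i \in s.1 & alpha <= bval (w i) (rule_set s k).

Definition step (n m : nat) (w : 'I_n -> 'I_m -> R) (alpha : R)
    (s : state n m) (k : nat) (i : 'I_n) (s' : state n m) : Prop :=
  [/\ (1 <= k <= 4)%N, i \in s.1, alpha <= bval (w i) (rule_set s k),
      (forall k', (1 <= k' < k)%N -> ~ applicable w alpha s k') &
      s' = (s.1 :\ i, [seq g <- s.2 | g \notin rule_set s k])].

Definition no_rule (n m : nat) (w : 'I_n -> 'I_m -> R) (alpha : R)
    (s : state n m) : Prop :=
  forall k, (1 <= k <= 4)%N -> ~ applicable w alpha s k.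

Inductive run (n m : nat) (w : 'I_n -> 'I_m -> R) (alpha : R) :
    state n m -> nat -> {set 'I_m} -> state n m -> Prop :=
| run_stop s : no_rule w alpha s -> run w alpha s 0 set0 s
| run_step s k i s' r G f :
    step w alpha s k i s' -> run w alpha s' r G f ->
    run w alpha s (if k == 4%N then r.+1 else r)
        (if k == 4%N then rule_set s k :|: G else G) f.

End Defs.

(* Main.v *)
Require Import Defs.
From mathcomp Require Import all_boot all_order all_algebra.
From mathcomp Require Import zify ring lra.
Set Implicit Arguments. Unset Strict Implicit. Unset Printing Implicit Defensive.

Lemma choose2 (T : finType) (L I : {set T}) : L \subset I -> #|L| <= 2 -> 2 <= #|I| ->
  exists l1 l2, [/\ l1 \in I, l2 \in I, l1 != l2 & L \subset [set l1; l2]].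
Proof.
move=> LI cL cI.
have ex2 : forall x, x \in I -> exists2 y, y \in I & x != y.
  move=> x xI; have : 0 < #|I :\ x| by move: cI; rewrite (cardsD1 x) xI; lia.
  by case/card_gt0P => y; rewrite !inE => /andP[yx yI]; exists y; rewrite // eq_sym.
have [E2|c2] := eqVneq #|L| 2.
  move/eqP: E2 => /cards2P [x [y [xy Lxy]]]; rewrite Lxy in LI *; exists x, y; split => //.
  - by apply: (subsetP LI); rewrite !inE eqxx.
  - by apply: (subsetP LI); rewrite !inE eqxx orbT.

have [E1|c1] := eqVneq #|L| 1.
  move/eqP: E1 => /cards1P [x Lx]; have xI : x \in I by apply: (subsetP LI); rewrite Lx inE.
  have [y yI xy] := ex2 x xI; exists x, y; split => //.
  by rewrite Lx sub1set !inE eqxx.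
have L0 : L = set0 by apply: cards0_eq; lia.
have [x xI] : exists x, x \in I by apply/card_gt0P; lia.
have [y yI xy] := ex2 x xI; exists x, y; split => //; by rewrite L0 sub0set.
Qed.

Section Merge.
Variables (n m : nat) (P : 'I_m -> 'I_n).

Definition Kc (c : 'I_m -> nat) (j : 'I_n) := \sum_(g | P g == j) c g.
Definition fib_ok (c : 'I_m -> nat) (h : 'I_n -> 'I_n) :=
  forall k, (exists j, h j = k) -> \sum_(j | h j == k) Kc c j + 4 <= \sum_(j | h j == k) 4.

Lemma sum_merge (h : 'I_n -> 'I_n) l1 l2 (X : 'I_n -> nat) : l1 != l2 ->
  \sum_(j | (if h j == l2 then l1 else h j) == l1) X j =
  \sum_(j | h j == l1) X j + \sum_(j | h j == l2) X j.
Proof.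
move=> l12; rewrite (bigID (fun j => h j == l2)) /= addnC; congr (_ + _); apply: eq_bigl => j.
  case E: (h j == l2) => /=; last by rewrite andbT.
  by rewrite (eqP E) eqxx andbF; apply/esym/negbTE; rewrite eq_sym.
by case E: (h j == l2) => /=; rewrite ?eqxx ?andbF.
Qed.

Lemma sum_other (h : 'I_n -> 'I_n) l1 l2 k (X : 'I_n -> nat) : k != l1 -> k != l2 ->
  \sum_(j | (if h j == l2 then l1 else h j) == k) X j = \sum_(j | h j == k) X j.
Proof.
move=> k1 k2; apply: eq_bigl => j; case E: (h j == l2) => //.
by rewrite (eqP E) eq_sym (negbTE k1) eq_sym (negbTE k2).
Qed.

Lemma Kc_add c d j : Kc (fun g => c g + d g) j = Kc c j + Kc d j.
Proof. by rewrite /Kc big_split. Qed.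

Lemma sum_Kc (Q : pred 'I_n) d : \sum_(j | Q j) Kc d j <= \sum_g d g.
Proof.
rewrite (partition_big P predT) //=.
rewrite [X in _ <= X](bigID Q) /= leq_addr //.
Qed.

Lemma merge_groups c h (d : 'I_m -> nat) : fib_ok c h -> \sum_g d g <= 4 ->
  #|P @: [set g | d g != 0]| <= 2 -> 2 <= #|h @: setT| ->
  exists h2, fib_ok (fun g => c g + d g) h2 /\ #|h @: setT| - 1 <= #|h2 @: setT|.
Proof.
move=> ok sd cP cI.
set L := h @: (P @: [set g | d g != 0]).
have LI : L \subset h @: setT by apply: imsetS; apply: subsetT.
have cL : #|L| <= 2 := leq_trans (leq_imset_card _ _) cP.
have [l1 [l2 [l1I l2I l12 sub]]] := choose2 LI cL cI.
have inI : forall l, l \in h @: setT -> exists j, h j = l.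
  by move=> l /imsetP [j _ ->]; exists j.
exists (fun j => if h j == l2 then l1 else h j); split.
  move=> k [j0 Hj0].
  case k1: (k == l1).
    rewrite (eqP k1) !sum_merge //.
    have e : forall Q : pred 'I_n, \sum_(j | Q j) Kc (fun g => c g + d g) j =
        \sum_(j | Q j) Kc c j + \sum_(j | Q j) Kc d j.
      by move=> Q; rewrite -big_split; apply: eq_bigr => j _; rewrite Kc_add.
    rewrite !e.
    have := ok l1 (inI _ l1I); have := ok l2 (inI _ l2I).
    have := sum_Kc (fun j => (if h j == l2 then l1 else h j) == l1) d.
    rewrite sum_merge //; lia.
  have k2 : k != l2.
    move: Hj0; case E: (h j0 == l2) => Hk; first by rewrite -Hk eqxx in k1.
    by rewrite -Hk E.
  rewrite !sum_other ?k2 ?k1 //.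
  have -> : \sum_(j | h j == k) Kc (fun g => c g + d g) j = \sum_(j | h j == k) Kc c j.
    apply: eq_bigr => j /eqP hj; rewrite Kc_add /Kc.
    rewrite [X in _ + X]big1 ?addn0 // => g /eqP Pg.
    have [//|dg] := eqVneq (d g) 0.
    have : h (P g) \in L by apply: imset_f; apply: imset_f; rewrite inE.
    by move/(subsetP sub); rewrite Pg hj !inE (negbTE k2) orbF k1.
  apply: ok; exists j0; move: Hj0; case E: (h j0 == l2) => Hk //.
  by rewrite -Hk eqxx in k1.
have : (h @: setT) :\ l2 \subset (fun j => if h j == l2 then l1 else h j) @: setT.
  apply/subsetP => l; rewrite !inE => /andP [nl2 /imsetP [j _ lE]]; subst l.
  apply/imsetP; exists j => //; case E: (h j == l2) => //.
  by rewrite E in nl2.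
move/subset_leq_card => H; have := cardsD1 l2 (h @: setT); rewrite l2I => ->; rewrite add1n subn1 /=; exact: H.
Qed.
End Merge.

Import Order.TTheory GRing.Theory Num.Theory.
Local Open Scope ring_scope.

Section Gen.
Variable R : realFieldType.

Lemma maxrr_r (x y : R) : x <= y -> Num.max x y = y.
Proof. exact: max_r. Qed.
Lemma maxrr_l (x y : R) : y <= x -> Num.max x y = x.
Proof. exact: max_l. Qed.

Lemma le_bigmax_seq (T : eqType) (r : seq T) (F : T -> R) x t :
  t \in r -> F t <= \big[Num.max/x]_(i <- r) F i.
Proof.
elim: r => // a r IH; rewrite in_cons big_cons => /orP[/eqP->|/IH H].
  by rewrite le_max lexx.
by rewrite le_max H orbT.
Qed.

Lemma bigmin_le_seq (T : eqType) (r : seq T) (F : T -> R) x t :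
  t \in r -> \big[Num.min/x]_(i <- r) F i <= F t.
Proof.
elim: r => // a r IH; rewrite in_cons big_cons => /orP[/eqP->|/IH H].
  by rewrite ge_min lexx.
by rewrite ge_min H orbT.
Qed.

Lemma le_bigmax (T : finType) (F : T -> R) x t :
  F t <= \big[Num.max/x]_(i : T) F i.
Proof. by apply: le_bigmax_seq; rewrite mem_index_enum. Qed.

Lemma bigmin_le (T : finType) (F : T -> R) x t :
  \big[Num.min/x]_(i : T) F i <= F t.
Proof. by apply: bigmin_le_seq; rewrite mem_index_enum. Qed.

Lemma bigmax_attained (T : finType) (F : T -> R) :
  \big[Num.max/0]_(i : T) F i != 0 -> exists t, \big[Num.max/0]_(i : T) F i = F t.
Proof.
pose K y := (y = 0) \/ (exists t, y = F t).
have : K (\big[Num.max/0]_(i : T) F i).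
  apply: (big_ind K); first by left.
    by move=> x y Hx Hy; case: (leP x y).
  by move=> t _; right; exists t.
by move=> [->|//]; rewrite eqxx.
Qed.

Lemma idx_le_bigmax (T : Type) (r : seq T) (F : T -> R) x :
  x <= \big[Num.max/x]_(i <- r) F i.
Proof.
elim: r => [|a r IH]; first by rewrite big_nil.
by rewrite big_cons le_max IH orbT.
Qed.

Lemma MMS_ge0 m d (v : 'I_m -> R) (S : {set 'I_m}) : 0 <= MMS d v S.
Proof. exact: idx_le_bigmax. Qed.

Lemma bval_ge0 m (v : 'I_m -> R) (S : {set 'I_m}) : (forall g, 0 <= v g) -> 0 <= bval v S.
Proof. by move=> H; apply: sumr_ge0. Qed.

Lemma bval_mem m (v : 'I_m -> R) (S : {set 'I_m}) g : (forall g, 0 <= v g) -> g \in S -> v g <= bval v S.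
Proof.
move=> H gS; rewrite /bval (bigD1 g) //= lerDl; apply: sumr_ge0 => ? _; exact: H.
Qed.

Lemma bval_sub m (v : 'I_m -> R) (S T : {set 'I_m}) : (forall g, 0 <= v g) -> S \subset T -> bval v S <= bval v T.
Proof.
move=> H sST; rewrite /bval [X in _ <= X](bigID (mem S)) /= -[X in X <= _]addr0 lerD //.
  rewrite le_eqVlt; apply/orP; left; apply/eqP; apply: eq_bigl => g /=.
  by case gS: (g \in S); rewrite ?andbF ?andbT // (subsetP sST).
apply: sumr_ge0 => ? _; exact: H.
Qed.
End Gen.

Section Ord.
Variables (R : realFieldType) (n m : nat) (v : 'I_n -> 'I_m -> R) (i : 'I_n).

Let srt := sort (fun x y : R => y <= x) [seq v i g | g <- enum 'I_m].

Lemma size_srt : size srt = m.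
Proof. by rewrite /srt size_sort size_map size_enum_ord. Qed.

Lemma order_val_ge0 : (forall g, 0 <= v i g) -> forall j, 0 <= order_val v i j.
Proof.
move=> H j; rewrite /order_val -/srt.
have := mem_nth 0 (_ : (j < size srt)%N); rewrite size_srt => /(_ (ltn_ord j)).
by rewrite /srt mem_sort => /mapP [g _ ->].
Qed.

Lemma order_val_mono (j j' : 'I_m) : (j <= j')%N -> order_val v i j' <= order_val v i j.
Proof.
move=> le; rewrite /order_val -/srt.
have so : sorted (fun x y : R => y <= x) srt.
  by apply: sort_sorted => x y; rewrite le_total.
apply: (sorted_leq_nth _ _ _ so) => //.
- by move=> y x z /= H1 H2; apply: le_trans H2 H1.
- by rewrite inE size_srt.
- by rewrite inE size_srt.
Qed.

Lemma order_perm : exists2 s : 'I_m -> 'I_m, injective s & forall j, order_val v i j = v i (s j).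
Proof.
have : perm_eq srt [seq v i g | g <- enum 'I_m] by rewrite /srt perm_sort.
case/(perm_iotaP 0) => Is pIs Hs.
have szI : size Is = m by rewrite (perm_size pIs) size_iota size_map size_enum_ord.
have ltI : forall j : 'I_m, (nth 0%N Is j < m)%N.
  move=> j; have := mem_nth 0%N (_ : (j < size Is)%N); rewrite szI => /(_ (ltn_ord j)).
  by rewrite (perm_mem pIs) mem_iota size_map size_enum_ord.
exists (fun j => Ordinal (ltI j)).
  move=> j1 j2 /(congr1 val) /= /eqP; rewrite nth_uniq ?szI //.
    by move/eqP/val_inj.
  by rewrite (perm_uniq pIs) iota_uniq.
move=> j; rewrite /order_val -/srt Hs (nth_map 0%N) ?szI //.
rewrite (nth_map j) ?size_enum_ord ?ltI //; congr (v i _).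
by apply: val_inj; rewrite /= nth_enum_ord ?ltI.
Qed.

Lemma MMS_order : MMS n (v i) setT <= MMS n (order_val v i) setT.
Proof.
have [s sinj Hs] := order_perm.
have bv : forall X : {set 'I_m}, bval (order_val v i) [set g | s g \in X] = bval (v i) X.
  move=> X; rewrite /bval [in RHS](reindex_inj sinj); apply: eq_big => g; first by rewrite !inE.
  by rewrite Hs.
rewrite /MMS; apply: (big_ind (fun y => y <= _)).
- exact: MMS_ge0.
- by move=> x y Hx Hy; rewrite ge_max Hx Hy.
move=> f _; apply: le_trans (le_bigmax _ _ [ffun j => f (s j)]).
rewrite /part_min le_eqVlt; apply/orP; left; apply/eqP.
have e1 : bval (order_val v i) [set: 'I_m] = bval (v i) [set: 'I_m].
  by rewrite -[RHS]bv; congr bval; apply/setP => g; rewrite !inE.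
rewrite e1; apply: eq_bigr => k _.
by rewrite -[LHS]bv; congr bval; apply/setP => g; rewrite !inE ffunE.
Qed.
End Ord.

Lemma ar_last (r0 cc ff : nat) : (0 < cc)%N -> (r0 + ff <= cc - 1)%N -> (r0.+1 + ff <= cc)%N.
Proof. lia. Qed.

Lemma card_le1 (T : finType) (X : {set T}) : (forall x y, x \in X -> y \in X -> x = y) -> (#|X| <= 1)%N.
Proof.
move=> H; case: (set_0Vmem X) => [->|[x xX]]; first by rewrite cards0.
have : X \subset [set x] by apply/subsetP => y yX; rewrite inE (H y x).
by move/subset_leq_card; rewrite cards1.
Qed.

Lemma pos_set1_le1 m (gs : seq 'I_m) p : (#|pos_set gs [:: p]| <= 1)%N.
Proof.
apply: card_le1 => x y; rewrite !inE => /andP [xs /eqP ex] /andP [ys /eqP ey].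
rewrite -(nth_index x xs) -(nth_index x ys); congr nth; apply: succn_inj; by rewrite ex ey.
Qed.

Section Bval3.
Variable R : realFieldType.
Lemma bval3 m (v : 'I_m -> R) (S : {set 'I_m}) x y z : (forall g, 0 <= v g) ->
  x \in S -> y \in S -> z \in S -> x != y -> x != z -> y != z ->
  v x + v y + v z <= bval v S.
Proof.
move=> H xS yS zS xy xz yz; rewrite /bval (bigD1 x) //= (bigD1 y) /=; last by rewrite yS eq_sym.
rewrite (bigD1 z) /=; last by rewrite zS eq_sym xz eq_sym yz.
rewrite !addrA lerDl; apply: sumr_ge0 => ? _; exact: H.
Qed.
End Bval3.

Section Run.
Variables (R : realFieldType) (n m : nat) (W : 'I_n -> 'I_m -> R) (alpha : R) (i : 'I_n) (P : 'I_m -> 'I_n).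
Hypotheses (Wge0 : forall g, 0 <= W i g)
  (Wmono : forall g g' : 'I_m, (g <= g')%N -> W i g' <= W i g) (alpha0 : 0 <= alpha).

Lemma notapp_lt (s : state n m) k : i \in s.1 -> ~ applicable W alpha s k ->
  bval (W i) (rule_set s k) < alpha.
Proof. by move=> iS NA; rewrite ltNge; apply/negP => H; apply: NA; exists i. Qed.

Lemma step4_A (s : state n m) g : i \in s.1 -> ~ applicable W alpha s 1 ->
  g \in pos_set s.2 [:: 1%N] -> W i g <= alpha.
Proof.
move=> iS NA gA; apply: le_trans (ltW (notapp_lt iS NA)).
exact: bval_mem.
Qed.

Lemma step4_B (s : state n m) g : i \in s.1 -> ~ applicable W alpha s 2 ->
  sorted (fun a b : 'I_m => (a < b)%N) s.2 -> uniq s.2 ->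
  g \in pos_set s.2 [:: (2 * #|s.1| + 1)%N] -> 3 * W i g <= alpha.
Proof.
move=> iS NA so un; rewrite !inE => /andP [gs /eqP eg].
have c0 : (0 < #|s.1|)%N by apply/card_gt0P; exists i.
have kl : (index g s.2 < size s.2)%N by rewrite index_mem.
move eqk : (index g s.2) eg kl => k eg kl.
have [x1 x1E] : exists x, x = nth g s.2 (k - 2) by eexists.
have [x2 x2E] : exists x, x = nth g s.2 (k - 1) by eexists.
have gE : g = nth g s.2 k by rewrite -eqk nth_index.
have k2l : (k - 2 < size s.2)%N := leq_ltn_trans (leq_subr _ _) kl.
have k1l : (k - 1 < size s.2)%N := leq_ltn_trans (leq_subr _ _) kl.
have kc : k = (2 * #|s.1|)%N by apply: succn_inj; rewrite eg addn1.
have k2 : (2 <= k)%N by rewrite kc; move: c0; move: #|s.1| => cc; clear; lia.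
have x1s : x1 \in s.2 by rewrite x1E mem_nth.
have x2s : x2 \in s.2 by rewrite x2E mem_nth.
have i1 : index x1 s.2 = (k - 2)%N by rewrite x1E index_uniq.
have i2 : index x2 s.2 = (k - 1)%N by rewrite x2E index_uniq.
have tr : transitive (fun a b : 'I_m => (a < b)%N) by move=> y x z; apply: ltn_trans.
have l1 : (x1 < g)%N.
  rewrite x1E {2}gE; apply: (sorted_ltn_nth tr) => //; rewrite ?inE //; move: k2; clear; lia.
have l2 : (x2 < g)%N.
  rewrite x2E {2}gE; apply: (sorted_ltn_nth tr) => //; rewrite ?inE //; move: k2; clear; lia.
have := notapp_lt iS NA; rewrite /rule_set /rule_pos.
have H := @bval3 _ _ (W i) (pos_set s.2 [:: (2 * #|s.1| - 1)%N; (2 * #|s.1|)%N; (2 * #|s.1| + 1)%N]) x1 x2 g Wge0.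
have := Wmono (ltnW l1); have := Wmono (ltnW l2).
have -> : (3 : R) * W i g = W i g + W i g + W i g by ring.
move=> w2 w1 lt.
have : W i x1 + W i x2 + W i g < alpha.
  apply: le_lt_trans lt; apply: H; rewrite ?inE ?x1s ?x2s ?gs ?i1 ?i2 ?eqk /=. 
  - apply/orP; left; rewrite kc; move: c0; move: #|s.1| => cc; clear; lia.
  - apply/orP; right; apply/orP; left; rewrite kc; move: c0; move: #|s.1| => cc; clear; lia.
  - apply/orP; right; apply/orP; right; rewrite kc; move: c0; move: #|s.1| => cc; clear; lia.
  - apply/negP => /eqP e; move: i1 i2 k2; rewrite e => ->; clear; lia.
  - apply/negP => /eqP e; move: l1; rewrite e; clear; lia.
  - apply/negP => /eqP e; move: l2; rewrite e; clear; lia.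
lra.
Qed.

Local Notation ltI := (fun a b : 'I_m => (a < b)%N).

Lemma run_groups s r G f : run W alpha s r G f -> i \in f.1 ->
  sorted ltI s.2 -> uniq s.2 ->
  exists c h, [/\ (forall g, g \in G -> W i g <= alpha / 3 * (c g)%:R),
     fib_ok P c h, (n - r <= #|h @: [set: 'I_n]|)%N,
     (r + #|f.1| <= #|s.1|)%N & i \in s.1].
Proof.
elim => [s0 nr | s0 k i0 s' r0 G0 f0 st Hr IH] iF so un.
  exists (fun _ => 0%N), (fun j => j); split => //.
  - by move=> g; rewrite inE.
  - by move=> k _; rewrite !big_pred1_eq /Kc big1.
  - have : [set: 'I_n] \subset (fun j => j) @: [set: 'I_n].
      by apply/subsetP => j _; apply/imsetP; exists j.
    by move/subset_leq_card; rewrite cardsT card_ord subn0.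
case: st => k14 i0S ge NA es'.
have so' : sorted ltI s'.2 by rewrite es' /=; apply: sorted_filter => // y x z; apply: ltn_trans.
have un' : uniq s'.2 by rewrite es' /=; apply: filter_uniq.
have [c [h [Gb ok img cnt iS']]] := IH iF so' un'.
have iS : i \in s0.1 by move: iS'; rewrite es' !inE => /andP[].
have cs' : #|s'.1| = (#|s0.1| - 1)%N.
  by rewrite es' /= (cardsD1 i0 s0.1) i0S add1n subn1.
have cs0 : (0 < #|s0.1|)%N by apply/card_gt0P; exists i.
case k4: (k == 4%N); last first.
  exists c, h; split => //.
  by apply: leq_trans cnt _; rewrite cs' leq_subr.
move/eqP: k4 => k4; subst k; rewrite /=.
have NA1 : ~ applicable W alpha s0 1 by apply: NA.
have NA2 : ~ applicable W alpha s0 2 by apply: NA.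
set A := pos_set s0.2 [:: 1%N].
set B := pos_set s0.2 [:: (2 * #|s0.1| + 1)%N].
have r4E : rule_set s0 4 = A :|: B.
  by apply/setP => g; rewrite /rule_set /rule_pos !inE andb_orr.
pose d g := (3 * (g \in A) + (g \in B))%N.
have sd : (\sum_g d g <= 4)%N.
  rewrite big_split /= -big_distrr /=.
  have e : forall X : {set 'I_m}, \sum_g ((g \in X) : nat) = #|X|.
    by move=> X; rewrite -sum1_card [in RHS]big_mkcond /=; apply: eq_bigr => g _; case: (g \in X).
  by rewrite !e; exact: (leq_add (leq_mul (leqnn 3) (pos_set1_le1 _ _)) (pos_set1_le1 _ _)).
have cP : (#|P @: [set g | d g != 0%N]| <= 2)%N.
  apply: leq_trans (leq_imset_card _ _) _.
  have -> : [set g | d g != 0%N] = A :|: B.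
    by apply/setP => g; rewrite in_setU; case gA: (g \in A); case gB: (g \in B); rewrite inE /d gA gB.
  rewrite cardsU; apply: leq_trans (leq_subr _ _) _.
  exact: (leq_add (pos_set1_le1 _ _) (pos_set1_le1 _ _)).
have fc : (0 < #|f0.1|)%N by apply/card_gt0P; exists i.
have cn : (#|s0.1| <= n)%N by rewrite -[X in (_ <= X)%N]card_ord max_card.
have cI : (2 <= #|h @: [set: 'I_n]|)%N.
  move: img cnt; rewrite cs'; move: #|s0.1| cs0 cn => cc; move: #|f0.1| fc => ff; move: #|h @: _| => hh; clear; lia.
have [h2 [ok2 img2]] := merge_groups ok sd cP cI.
exists (fun g => c g + d g)%N, h2; split => //.
- move=> g; rewrite inE r4E inE.
  have a3 : 0 <= alpha / 3 by apply: divr_ge0 => //; lra.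
  case/orP => [/orP [gA|gB]|gG].
  + apply: le_trans (step4_A iS NA1 gA) _.
    have : (3 <= c g + d g)%N by apply: leq_trans (leq_addl _ _); rewrite /d gA; exact: leq_addr.
    rewrite -(ler_nat R) => H3; apply: le_trans (ler_wpM2l a3 H3).
    by rewrite divfK ?lexx // pnatr_eq0.
  + have := step4_B iS NA2 so un gB => H1.
    have : (1 <= c g + d g)%N by apply: leq_trans (leq_addl _ _); rewrite /d gB addn1.
    rewrite -(ler_nat R) => H3; apply: le_trans (ler_wpM2l a3 H3).
    by rewrite mulr1 ler_pdivlMr ?ltr0n // mulrC.
  + apply: le_trans (Gb g gG) _; apply: ler_wpM2l => //.
    by rewrite ler_nat leq_addr.
- move: img img2; move: #|h @: _| #|h2 @: _| => a b; clear; lia.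
- move: cnt; rewrite cs'; move: #|s0.1| cs0 => cc; move: #|f0.1| => ff; exact: ar_last.
Qed.
End Run.

Section Final.
Variable R : realFieldType.

Lemma sum_sub_le (I : finType) (A B : pred I) (F : I -> R) : (forall x, 0 <= F x) ->
  \sum_(x | A x && B x) F x <= \sum_(x | A x) F x.
Proof.
move=> H; rewrite [X in _ <= X](bigID B) /= lerDl; apply: sumr_ge0 => ? _; exact: H.
Qed.

Lemma bundle_bound m n (w : 'I_m -> R) (P : 'I_m -> 'I_n) (G : {set 'I_m}) (c : 'I_m -> nat)
  (alpha tau : R) j :
  (forall g, 0 <= w g) -> 1 <= \sum_(g | P g == j) w g ->
  (forall g, g \in G -> w g <= alpha / 3 * (c g)%:R) ->
  0 <= tau -> tau = 4 - 4 * alpha -> 3/4 <= alpha ->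
  tau * (4 - (Kc P c j)%:R) <= 4 * \sum_(g | (g \notin G) && (P g == j)) w g.
Proof.
move=> w0 S1 Gb t0 tE a0.
set l := \sum_(g | _) w g.
have l0 : 0 <= l by apply: sumr_ge0.
have a3 : 0 <= alpha / 3 by apply: divr_ge0 => //; lra.
have X : \sum_(g | P g == j) w g <= l + alpha / 3 * (Kc P c j)%:R.
  rewrite (bigID (fun g => g \in G)) /= addrC lerD //.
    by rewrite le_eqVlt; apply/orP; left; apply/eqP; apply: eq_bigl => g; rewrite andbC.
  apply: le_trans (_ : \sum_(g | (P g == j) && (g \in G)) alpha / 3 * (c g)%:R <= _).
    by apply: ler_sum => g /andP [_ gG]; apply: Gb.
  rewrite -mulr_sumr; apply: ler_wpM2l => //.
  rewrite /Kc natr_sum; apply: sum_sub_le => g; exact: ler0n.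
move: X; move: (Kc P c j) => K X.
case: (leqP 4 K) => HK.
  have : (4 : R) <= K%:R by rewrite (ler_nat R 4 K).
  move=> H4; nra.
move: HK X; case: K => [|[|[|[|K]]]] // _ X; rewrite ?natr0 ?natr1 /=; 
  try (have -> : (2%:R : R) = 2 by []); try (have -> : (3%:R : R) = 3 by []); lra.
Qed.
End Final.

Lemma sorted_enum_ord m : sorted (fun a b : 'I_m => (a < b)%N) (enum 'I_m).
Proof.
have : sorted ltn (map val (enum 'I_m)) by rewrite val_enum_ord; apply: iota_ltn_sorted.
by rewrite sorted_map.
Qed.

Lemma minn_lt d x : (0 < d)%N -> (minn x d.-1 < d)%N.
Proof. lia. Qed.


Theorem lemma18 (R : realFieldType) (n m : nat) (v : 'I_n -> 'I_m -> R) (eps : R) :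
  (forall i g, 0 <= v i g) ->
  (forall i, 0 < MMS n (v i) setT) ->
  0 <= eps ->
  forall (Nf : {set 'I_n}) (Mf : seq 'I_m) (r4 : nat) (G4 : {set 'I_m}),
    run (norm_val v) (3 / 4 + eps) ([set: 'I_n], enum 'I_m) r4 G4 (Nf, Mf) ->
    forall i, i \in Nf ->
      1 - 4 * eps <= MMS (n - r4) (norm_val v i) (~: G4).
Proof.
move=> v0 mms0 eps0 Nf Mf r4 G4 Hrun i iN.
case: (lerP (1 - 4 * eps) 0) => [le0|gt0]; first exact: le_trans le0 (MMS_ge0 _ _ _).
set mu := MMS n (order_val v i) setT.
have mu0 : 0 < mu := lt_le_trans (mms0 i) (MMS_order v i).
have [f0 f0E] : exists f0 : {ffun 'I_m -> 'I_n}, mu = part_min (order_val v i) setT f0.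
  case: (@bigmax_attained R {ffun 'I_m -> 'I_n} (fun f => part_min (order_val v i) setT f)).
    by change (mu != 0); rewrite gt_eqF.
  by move=> f0 E; exists f0; exact: E.
set w := norm_val v i.
have w0 : forall g, 0 <= w g.
  move=> g; apply: divr_ge0; [exact: order_val_ge0 | exact: ltW].
have wmono : forall g g' : 'I_m, (g <= g')%N -> w g' <= w g.
  move=> g g' le; apply: ler_wpM2r; [by rewrite invr_ge0 ltW | exact: order_val_mono].
have S1 : forall j, 1 <= \sum_(g | f0 g == j) w g.
  move=> j; have H : mu <= bval (order_val v i) [set g in setT | f0 g == j].
    by rewrite f0E /part_min; apply: bigmin_le.
  rewrite /w /norm_val -/mu -mulr_suml ler_pdivlMr // mul1r.
  apply: le_trans H _; rewrite /bval le_eqVlt; apply/orP; left; apply/eqP.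
  by apply: eq_bigl => g; rewrite !inE.
have a0 : 0 <= 3 / 4 + eps by lra.
have [c [h [Gb ok img cnt _]]] := run_groups (fun g => f0 g) w0 wmono a0 Hrun iN (sorted_enum_ord m) (enum_uniq _).
have d0 : (0 < n - r4)%N.
  have fc : (0 < #|Nf|)%N by apply/card_gt0P; exists i.
  move: cnt fc; rewrite cardsT card_ord /=; move: #|Nf| => ff; clear; lia.
set I := h @: [set: 'I_n] in img.
pose phi (l : 'I_n) : 'I_(n - r4) := Ordinal (minn_lt (index l (enum I)) d0).
pose F := [ffun g => phi (h (f0 g))].
set tau := 1 - 4 * eps.
have bk : forall k : 'I_(n - r4), tau <= bval w [set g in ~: G4 | F g == k].
  move=> k.
  have kI : (k < size (enum I))%N by rewrite -cardE; apply: leq_trans (ltn_ord k) img.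
  set l0 := nth (h i) (enum I) k.
  have l0I : l0 \in I by rewrite -mem_enum mem_nth.
  have phil0 : phi l0 = k.
    apply: val_inj; rewrite /= index_uniq ?enum_uniq //; apply/minn_idPl.
    by rewrite -ltnS prednK // ltn_ord.
  have [j0 hj0] : exists j0, h j0 = l0 by case/imsetP: l0I => j0 _ ->; exists j0.
  apply: le_trans (_ : \sum_(g | (g \notin G4) && (h (f0 g) == l0)) w g <= _); last first.
    rewrite /bval; apply: le_trans (sum_sub_le _ (fun g => h (f0 g) == l0) w0).
    rewrite le_eqVlt; apply/orP; left; apply/eqP; apply: eq_bigl => g; rewrite !inE.
    case E: (h (f0 g) == l0); rewrite ?andbF ?andbT //.
    by rewrite ffunE (eqP E) phil0 eqxx andbT.
  rewrite (partition_big (fun g => f0 g) (fun j => h j == l0)) /=; last by move=> g /andP[].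
  have e : forall j, h j == l0 -> \sum_(g | ((g \notin G4) && (h (f0 g) == l0)) && (f0 g == j)) w g =
      \sum_(g | (g \notin G4) && (f0 g == j)) w g.
    move=> j hj; apply: eq_bigl => g; case E: (f0 g == j); rewrite ?andbF ?andbT //.
    by rewrite (eqP E) hj andbT.
  rewrite (eq_bigr _ e).
  have key : (4 : R) <= \sum_(j | h j == l0) (4 - (Kc (fun g => f0 g) c j)%:R).
    have := ok l0 (ex_intro _ j0 hj0); rewrite -(@ler_nat R) natrD !natr_sum => H.
    have -> : \sum_(j | h j == l0) (4 - (Kc (fun g => f0 g) c j)%:R) = \sum_(j | h j == l0) (4 : R) - \sum_(j | h j == l0) (Kc (fun g => f0 g) c j)%:R by rewrite sumrB.
    lra.
  have bb : forall j, tau * (4 - (Kc (fun g => f0 g) c j)%:R) <=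
      4 * \sum_(g | (g \notin G4) && (f0 g == j)) w g.
    move=> j; apply: (bundle_bound (alpha := 3 / 4 + eps)) => //; rewrite /tau; lra.
  have H : \sum_(j | h j == l0) tau * (4 - (Kc (fun g => f0 g) c j)%:R) <=
      \sum_(j | h j == l0) 4 * \sum_(g | (g \notin G4) && (f0 g == j)) w g.
    by apply: ler_sum => j _; exact: bb j.
  rewrite -!mulr_sumr in H.
  have : tau * 4 <= tau * \sum_(j | h j == l0) (4 - (Kc (fun g => f0 g) c j)%:R).
    by apply: ler_wpM2l => //; rewrite /tau; lra.
  move: H; rewrite /tau; lra.
apply: le_trans (le_bigmax _ _ F); rewrite /part_min.
apply: (big_ind (fun y => tau <= y)).
- apply: le_trans (bk (Ordinal d0)) _; apply: bval_sub => //.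
  by apply/subsetP => g; rewrite inE => /andP[].
- by move=> x y Hx Hy; rewrite le_min Hx Hy.
- by move=> k _; exact: bk.
Qed.
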